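(* Let $\alpha$ be an action of a group $\Gamma$ by homeomorphisms on an infinite Hausdorff topological space $X$. Then $\alpha$ is highly topologically transitive if and only if one of the following holds: (i) $X$ is perfect (has no isolated points) and for every $d\ge1$ the diagonal action $\alpha^d$ on $X^d$ (product topology) is topologically transitive; or (ii) the set of isolated points of $X$ is dense in $X$, and the restriction of $\alpha$ to this set is highly transitive (in particular this set is a single orbit).
   Context: For an action by homeomorphisms on a Hausdorff space $X$: it is topologically transitive if for all nonempty open $U,V\subseteq X$ there is $\gamma$ with $U\alpha(\gamma)\cap V\neq\emptyset$; for $d\ge1$ it is $d$-topologically transitive if the diagonal action on $X^{(d)}=\{(x_1,\dots,x_d)\in X^d:x_i\neq x_j\text{ for } i\ne j\}$ (topology induced from $X^d$) is topologically transitive; for infinite $X$ it is highly topologically transitive if it is $d$-topologically transitive for every $d\ge1$. An action on an infinite set is highly transitive if for every $d$, all pairwise distinct $x_1,\dots,x_d$ and all pairwise distinct $y_1,\dots,y_d$, some group element maps $x_i$ to $y_i$ for all $i$. *)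

(* Defs.v *)
From HB Require Import structures.
From mathcomp Require Import all_boot monoid.
From mathcomp Require Import boolp classical_sets functions cardinality topology.
Set Implicit Arguments. Unset Strict Implicit. Unset Printing Implicit Defensive.
Local Open Scope classical_set_scope.

(* A (right) action of the group G on a topological space X by homeomorphisms:
   x (gh) = (x g) h, x 1 = x, and every alpha g is continuous (its inverse
   alpha g^-1 is then continuous as well, so alpha g is a homeomorphism). *)
Definition is_action (G : groupType) (X : Type) (alpha : G -> X -> X) :=
  (forall x, alpha 1%g x = x) /\
  (forall g h x, alpha (g * h)%g x = alpha h (alpha g x)).

Definition homeo_action (G : groupType) (X : topologicalType)
  (alpha : G -> X -> X) :=
  is_action alpha /\ (forall g, continuous (alpha g)) /\
  (forall g, bijective (alpha g)).

(* Topological transitivity of an action of G on the subspace S of Y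
   (subspace topology: the open sets of S are the U `&` S, U open in Y). *)
Definition top_trans_on (G : Type) (Y : topologicalType) (S : set Y)
  (a : G -> Y -> Y) :=
  forall U V : set Y, open U -> open V ->
    (U `&` S) !=set0 -> (V `&` S) !=set0 ->
    exists g, (a g @` (U `&` S)) `&` (V `&` S) !=set0.

Definition top_trans (G : Type) (Y : topologicalType) (a : G -> Y -> Y) :=
  top_trans_on setT a.

(* X^d as {ptws 'I_d -> X}: 'I_d -> X with the product topology; diagonal action. *)
Definition diag_action (G : Type) (X : topologicalType) (alpha : G -> X -> X)
  (d : nat) : G -> {ptws 'I_d -> X} -> {ptws 'I_d -> X} :=
  fun g x => alpha g \o x.
Arguments diag_action {G X} alpha d.

Definition distinct_tuples (X : topologicalType) (d : nat)
  : set {ptws 'I_d -> X} :=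
  [set x | injective x].

Definition d_top_trans (G : Type) (X : topologicalType) (alpha : G -> X -> X)
  (d : nat) :=
  top_trans_on (@distinct_tuples X d) (diag_action alpha d).

Definition highly_top_trans (G : Type) (X : topologicalType)
  (alpha : G -> X -> X) :=
  forall d, (1 <= d)%N -> d_top_trans alpha d.

Definition highly_trans_on (G : Type) (X : Type) (A : set X)
  (alpha : G -> X -> X) :=
  infinite_set A /\
  forall (d : nat) (x y : 'I_d -> X), injective x -> injective y ->
    (forall i, A (x i)) -> (forall i, A (y i)) ->
    exists g, forall i, alpha g (x i) = y i.

(* Main.v *)
Require Import Defs.
From HB Require Import structures.
From mathcomp Require Import all_boot monoid.
From mathcomp Require Import boolp classical_sets functions cardinality topology.
Set Implicit Arguments. Unset Strict Implicit. Unset Printing Implicit Defensive.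
Local Open Scope classical_set_scope.

Section Box.
Context (X : topologicalType) (d : nat).

Definition boxF (u : {ptws 'I_d -> X}) : set_system {ptws 'I_d -> X} :=
  [set U | exists B : 'I_d -> set X, (forall i, nbhs (u i) (B i)) /\
     (forall v : {ptws 'I_d -> X}, (forall i, B i (v i)) -> U v)].

Lemma boxF_filter u : Filter (boxF u).
Proof.
split.
- by exists (fun _ => setT); split => // i; exact: filterT.
- move=> P Q [B [nB sB]] [C [nC sC]]; exists (fun i => B i `&` C i); split.
    by move=> i; apply: filterI.
  by move=> v H; split; [apply: sB => i; case: (H i)|apply: sC => i; case: (H i)].
- move=> P Q PQ [B [nB sB]]; exists B; split => // v /sB; exact: PQ.
Qed.

Lemma box_nbhs (u : {ptws 'I_d -> X}) U : nbhs u U ->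
  exists B : 'I_d -> set X, (forall i, nbhs (u i) (B i)) /\
     (forall v : {ptws 'I_d -> X}, (forall i, B i (v i)) -> U v).
Proof.
have FF := boxF_filter u.
suff : boxF u --> u by move=> /(_ U) H /H.
apply/cvg_sup => i A /=; rewrite (@nbhsE (initial_topology (fun f : forall _ : 'I_d, X => f i))) => -[B [[C oC <-] Bu] BA]; exists (fun j => if j == i then C else setT); split.
  by move=> j; case: eqP => [->|_]; [exact: open_nbhs_nbhs|exact: filterT].
by move=> v H; apply: BA; have := H i; rewrite eqxx.
Qed.
End Box.

Section Helpers.
Context (X : topologicalType) (d : nat).

Lemma proj_nbhs (f : {ptws 'I_d -> X}) i (B : set X) :
  nbhs (f i) B -> nbhs f [set v : {ptws 'I_d -> X} | B (v i)].
Proof. by move=> nB; have := @proj_continuous 'I_d (fun _ => X) i f B nB. Qed.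

Lemma box_to_nbhs (f : {ptws 'I_d -> X}) (B : 'I_d -> set X) :
  (forall i, nbhs (f i) (B i)) ->
  nbhs f [set v : {ptws 'I_d -> X} | forall i, B i (v i)].
Proof.
move=> nB.
exact: (@filter_forall _ 'I_d (fun i (v : {ptws 'I_d -> X}) => B i (v i))
  (nbhs f) _ (fun i => proj_nbhs (nB i))).
Qed.

Lemma open_diag (h : X -> X) (U : set {ptws 'I_d -> X}) :
  continuous h -> open U -> open ((fun v : {ptws 'I_d -> X} => h \o v) @^-1` U).
Proof.
move=> ch oU; rewrite openE => f /= Uf.
have [B [nB sB]] := @box_nbhs X d (h \o f) U (open_nbhs_nbhs (conj oU Uf)).
apply: filterS (box_to_nbhs (B := fun i => h @^-1` B i) _).
  by move=> v /= H; apply: sB.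
move=> i; exact: (ch (f i) _ (nB i)).
Qed.

End Helpers.

Lemma greedy (T : eqType) (d : nat) (B : 'I_d -> set T) :
  (forall i (s : seq T), exists x, B i x /\ x \notin s) ->
  exists a : 'I_d -> T, injective a /\ forall i, B i (a i).
Proof.
elim: d B => [|d IH] B hB.
  have f : 'I_0 -> T by case=> m; rewrite ltn0.
  by exists f; split; [case|case].
have [a' [ia' Ba']] := IH (fun j => B (lift ord_max j)) (fun j => hB _).
have [x [Bx xn]] := hB ord_max [seq a' j | j <- enum 'I_d].
pose a i := if unlift ord_max i is Some j then a' j else x.
exists a; split.
  move=> i k; rewrite /a.
  case: (unliftP ord_max i) => [j ->|->]; case: (unliftP ord_max k) => [l ->|->] //.
  - by move=> /ia' ->.
  - by move=> E; move: xn; rewrite -E; move/negP; case; apply: map_f; rewrite mem_enum.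
  - by move=> E; move: xn; rewrite E; move/negP; case; apply: map_f; rewrite mem_enum.
move=> i; rewrite /a; case: (unliftP ord_max i) => [j ->|->] //.
Qed.

Lemma avoid_nbhs (X : topologicalType) : accessible_space X ->
  forall (z : X) (s : seq X),
  nbhs z [set x | forall y, y \in s -> y != z -> x != y].
Proof.
move=> aX z; elim=> [|y s IH].
  by apply: nearW => x y; rewrite in_nil.
have ny : nbhs z [set x | y != z -> x != y].
  have [->|yz] := eqVneq y z; first by apply: nearW.
  apply: filterS (open_nbhs_nbhs (_ : open_nbhs z (~` [set y]))).
    by move=> x /= nx _; apply/eqP => E; apply: nx.
  split; first by rewrite openC; exact: accessible_closed_set1.
  by move=> /= E; move: yz; rewrite E eqxx.
apply: filterS (filterI IH ny) => x [H1 H2] w; rewrite in_cons.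
by case/orP => [/eqP ->|/H1//]; exact: H2.
Qed.

Lemma perfect_pick (X : topologicalType) : accessible_space X ->
  isolated [set: X] = set0 -> forall (z : X) W, nbhs z W ->
  forall s : seq X, exists x, W x /\ x \notin s.
Proof.
move=> aX iso z W nW s.
have nW' : nbhs z (W `&` [set x | forall y, y \in s -> y != z -> x != y]).
  by apply: filterI => //; exact: avoid_nbhs.
have [x [Wx xz]] : exists x, (W `&` [set x | forall y, y \in s -> y != z -> x != y]) x /\ x != z.
  apply: contrapT => /forallNP H.
  have : isolated [set: X] z.
    split; first by rewrite in_setT.
    exists (W `&` [set x | forall y, y \in s -> y != z -> x != y]) => //.
    rewrite setIT; apply/seteqP; split => [x Wx|x ->].
      by apply: contrapT => xz; apply: (H x); split => //; exact/eqP.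
    exact: nbhs_singleton nW'.
  by rewrite iso.
exists x; split; first by case: Wx.
by apply/negP => xs; case: Wx => _ /(_ x xs xz); rewrite eqxx.
Qed.

Lemma perfect_inj (X : topologicalType) (d : nat) : accessible_space X ->
  isolated [set: X] = set0 -> forall (U : set {ptws 'I_d -> X}) u,
  open U -> U u -> exists v : {ptws 'I_d -> X}, U v /\ injective v.
Proof.
move=> aX iso U u oU Uu.
have [B [nB sB]] := @box_nbhs X d u U (open_nbhs_nbhs (conj oU Uu)).
have [a [ia Ba]] := @greedy X d B (fun i => perfect_pick aX iso (nB i)).
by exists a; split => //; exact: sB.
Qed.

Lemma sep_nbhs (X : topologicalType) : hausdorff_space X ->
  forall d (u : 'I_d -> X), injective u ->
  exists W : 'I_d -> set X, (forall i, nbhs (u i) (W i)) /\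
    (forall i j x, W i x -> W j x -> i = j).
Proof.
rewrite open_hausdorff => hX d u iu.
have [AB hAB] : {AB : 'I_d * 'I_d -> set X * set X & forall p, p.1 != p.2 ->
   [/\ (AB p).1 (u p.1), (AB p).2 (u p.2), open (AB p).1, open (AB p).2 &
       (AB p).1 `&` (AB p).2 = set0]}.
  apply: (@choice _ _ (fun (p : 'I_d * 'I_d) (AB : set X * set X) => p.1 != p.2 ->
   [/\ AB.1 (u p.1), AB.2 (u p.2), open AB.1, open AB.2 & AB.1 `&` AB.2 = set0])).
  move=> -[i j] /=.
  have [ij|ij] := eqVneq i j; first by exists (setT, setT).
  have uij : u i != u j by apply: contra ij => /eqP /iu ->.
  have [[A B] [/= uA uB] [oA oB /eqP AB0]] := hX _ _ uij.
  exists (A, B) => _; split => //; exact: set_mem.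
exists (fun i => [set x | forall j, j != i -> (AB (i, j)).1 x /\ (AB (j, i)).2 x]).
split.
  move=> i.
  apply: (@filter_forall _ 'I_d (fun j x => j != i -> (AB (i, j)).1 x /\ (AB (j, i)).2 x) (nbhs (u i)) _) => j.
  have [->|ji] := eqVneq j i; first by apply: nearW.
  have ij : (i, j).1 != (i, j).2 by rewrite /= eq_sym.
  have [h1 _ o1 _ _] := hAB (i, j) ij.
  have [_ h2 _ o2 _] := hAB (j, i) ji.
  apply: filterS (open_nbhs_nbhs (_ : open_nbhs (u i) ((AB (i, j)).1 `&` (AB (j, i)).2))).
    by move=> x [].
  by split; [exact: openI|split].
move=> i j x Wi Wj; apply/eqP; apply: contraT => ij.
have [_ _ _ _ e] := hAB (i, j) ij.
have ji : j != i by rewrite eq_sym.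
have [a _] := Wi j ji.
have [_ b] := Wj i ij.
have : ((AB (i, j)).1 `&` (AB (i, j)).2) x by [].
by rewrite e.
Qed.

Lemma iso_inj (X : topologicalType) (d : nat) : hausdorff_space X ->
  dense (isolated [set: X]) -> forall (U : set {ptws 'I_d -> X}) u,
  open U -> U u -> injective u ->
  exists v : {ptws 'I_d -> X}, [/\ U v, injective v & forall i, isolated [set: X] (v i)].
Proof.
move=> hX dI U u oU Uu iu.
have [B [nB sB]] := @box_nbhs X d u U (open_nbhs_nbhs (conj oU Uu)).
have [W [nW dW]] := sep_nbhs hX iu.
have [v hv] : {v : 'I_d -> X & forall i, interior (B i `&` W i) (v i) /\ isolated [set: X] (v i)}.
  apply: (@choice _ _ (fun i x => interior (B i `&` W i) x /\ isolated [set: X] x)) => i.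
  have [x [? ?]] := dI (interior (B i `&` W i)) (ex_intro _ (u i) (filterI (nB i) (nW i)) : _ !=set0) (@open_interior _ _).
  by exists x.
exists v; split.
- apply: sB => i; have [/interior_subset [] ] := hv i; done.
- move=> i j e; apply: (dW i j (v i)).
    by have [/interior_subset [] ] := hv i.
  by rewrite e; have [/interior_subset [] ] := hv j.
- by move=> i; case: (hv i).
Qed.

Lemma iso_open (X : topologicalType) (x : X) :
  isolated [set: X] x <-> nbhs x [set x].
Proof.
split.
  by move=> [_ [V nV]]; rewrite setIT => <-.
by move=> nx; split; [rewrite in_setT|exists [set x] => //; rewrite setIT].
Qed.

Lemma pts_open (X : topologicalType) d (x : {ptws 'I_d -> X}) :
  (forall i, nbhs (x i) [set x i]) ->
  open [set f : {ptws 'I_d -> X} | forall i, f i = x i].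
Proof.
move=> nx; rewrite openE => f Uf.
have -> : f = x by apply: funext.
exact: (@box_to_nbhs X d x (fun i => [set x i]) nx).
Qed.

Lemma L1 (G : Type) (X : topologicalType) (alpha : G -> X -> X) d :
  d_top_trans alpha d -> forall x : {ptws 'I_d -> X}, injective x ->
  (forall i, nbhs (x i) [set x i]) ->
  forall V, open V -> (V `&` @distinct_tuples X d) !=set0 ->
  exists g, V (alpha g \o x).
Proof.
move=> T x ix nx V oV V0.
have [g [y [[f [Uf _] <-] [Vy _]]]] := T _ V (pts_open nx) oV
  (ex_intro _ x (conj (fun i => erefl) ix)) V0.
exists g; have -> : x = f by apply: funext => i; rewrite Uf.
exact: Vy.
Qed.

Unset Implicit Arguments.

Theorem mainTheorem5 (G : groupType) (X : topologicalType)
  (alpha : G -> X -> X) :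
  homeo_action alpha -> hausdorff_space X -> infinite_set [set: X] ->
  (highly_top_trans alpha <->
     ((isolated [set: X] = set0 /\
       forall d, (1 <= d)%N -> top_trans (diag_action alpha d))
      \/
      (dense (isolated [set: X]) /\
       highly_trans_on (isolated [set: X]) alpha))).
Proof.
move=> [[act1 actM] [cont bij]] hX infX.
have aX := hausdorff_accessible hX.
have inj g : injective (alpha g) by exact: bij_inj.
have invK g x : alpha g^-1%g (alpha g x) = x by rewrite -actM mulgV act1.
have isoG g x : isolated [set: X] x -> isolated [set: X] (alpha g x).
  move=> /iso_open nx; apply/iso_open.
  have h1 : nbhs (alpha g^-1%g (alpha g x)) [set x] by rewrite invK.
  have := cont g^-1%g (alpha g x) [set x] h1.
  move=> H; apply: (@filterS _ (nbhs (alpha g x)) _ (alpha g^-1%g @^-1` [set x])) H => y /= e.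
  by rewrite -e -actM mulVg act1.
have inj1 (z : X) : injective (fun _ : 'I_1 => z).
  by move=> i j _; rewrite (ord1 i) (ord1 j).
split.
- move=> HT.
  case: (pselect (exists x0, isolated [set: X] x0)) => [[x0 ix0]|noiso]; [right|left].
  + have dens V : open V -> V !=set0 -> exists g, V (alpha g x0).
      move=> oV [v Vv].
      have oV1 : open [set f : {ptws 'I_1 -> X} | V (f ord0)].
        by rewrite openE => f Vf; apply: proj_nbhs; exact: open_nbhs_nbhs.
      have [g Vg] := @L1 G X alpha 1 (HT 1 isT) (fun _ => x0) (inj1 x0)
        (fun _ => (iso_open x0).1 ix0) _ oV1
        (ex_intro _ (fun _ => v) (conj Vv (inj1 v))).
      by exists g.
    have dI : dense (isolated [set: X]).
      move=> O O0 oO; have [g Og] := dens O oO O0.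
      by exists (alpha g x0); split => //; exact: isoG.
    split => //; split.
      move=> fin.
      have cl : closed (isolated [set: X]) := (accessible_finite_set_closed.1 aX) _ fin.
      apply: infX; suff -> : [set: X] = isolated [set: X] by [].
      apply/seteqP; split => // y _; apply: contrapT => ny.
      have [z [nz iz]] := dI (~` isolated [set: X]) (ex_intro _ y ny) (closed_openC cl).
      exact: nz.
    case=> [|d] x y ix iy Ix Iy; first by exists 1%g; case.
    have [g Vg] := @L1 G X alpha d.+1 (HT d.+1 isT) x ix (fun i => (iso_open _).1 (Ix i))
      _ (pts_open (fun i => (iso_open _).1 (Iy i))) (ex_intro _ y (conj (fun i => erefl) iy)).
    by exists g => i; exact: Vg i.
  + have iso0 : isolated [set: X] = set0.
      by apply/seteqP; split => [x ix|x []]; case: noiso; exists x.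
    split => // d d1 U V oU oV [u [Uu _]] [v [Vv _]].
    have [u' [Uu' iu']] := perfect_inj aX iso0 oU Uu.
    have [v' [Vv' iv']] := perfect_inj aX iso0 oV Vv.
    have [g [y [[f [Uf Sf] <-] [Vy Sy]]]] := HT d d1 U V oU oV
      (ex_intro _ u' (conj Uu' iu')) (ex_intro _ v' (conj Vv' iv')).
    by exists g, (diag_action alpha d g f); split; [exists f|].
- case => [[iso0 TT]|[dI [infI HTo]]] d d1 U V oU oV [u [Uu Su]] [v [Vv Sv]].
  + have [g [y [[f [Uf _] <-] [Vy _]]]] := TT d d1 U V oU oV
      (ex_intro _ u (conj Uu I)) (ex_intro _ v (conj Vv I)).
    have oW : open (U `&` (diag_action alpha d g @^-1` V)).
      exact: openI oU (open_diag (cont g) oV).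
    have [w [[Uw Vw] iw]] := perfect_inj aX iso0 oW (conj Uf Vy).
    exists g, (diag_action alpha d g w); split; first by exists w.
    by split => //; rewrite /diag_action; exact: inj_comp.
  + have [a [Ua ia Ia]] := iso_inj hX dI oU Uu Su.
    have [b [Vb ib Ib]] := iso_inj hX dI oV Vv Sv.
    have [g hg] := HTo d a b ia ib Ia Ib.
    exists g, b; split => //; exists a => //.
    by apply: funext => i; exact: hg.
Qed.
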